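(* Let $n\ge 3$ and $m\ge 1$ be integers, and let $Q_{n,1},\dots,Q_{n,m}$ be the partition of $\{0,1,\dots,m+1\}^n$ defined below. Then for every $1\le i<j\le m$, $Q_{n,i}$ and $Q_{n,j}$ are adjacent (the partition is internally adjacent).
   Context: Define $f:\{0,\dots,m+1\}^3\to\{1,\dots,m\}$ by: $f(x,y,z)=y$ if $0\le x\le m$, $1\le y\le m$, $z=0$; $f=x$ if $1\le x\le m$, $0\le y\le m$, $z=m+1$; $f=y$ if $x=0$, $1\le y\le m$, $1\le z\le m$; $f=x$ if $1\le x\le m$, $y=0$, $1\le z\le m$; $f=z$ if $1\le x\le m+1$, $1\le y\le m+1$, $1\le z\le m$; and $f=1$ at all remaining points. Let $f_3=f$ and for $n\ge4$: $f_n(x_1,\dots,x_n)=f_{n-1}(x_1,x_2,x_3,\dots,x_{n-1})$ if $0\le x_n\le m$, and $f_n(x_1,\dots,x_n)=f_{n-1}(m+1-x_2,x_1,x_3,\dots,x_{n-1})$ if $x_n=m+1$. Let $Q_{n,i}=\{x\in\{0,\dots,m+1\}^n: f_n(x)=i\}$. Two disjoint sets $P,Q\subset\mathbb{Z}^n$ are adjacent if there exist $p\in P$, $q\in Q$ and a unit vector $v$ parallel to a coordinate axis with $p+v=q$. *)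

(* Defs.v *)
From mathcomp Require Import all_boot.
Set Implicit Arguments. Unset Strict Implicit. Unset Printing Implicit Defensive.

(* The base function f : {0..m+1}^3 -> {1..m}; the five defining cases are
   pairwise disjoint, so the order of the tests is irrelevant. *)
Definition f3 (m x y z : nat) : nat :=
  if [&& x <= m, 1 <= y <= m & z == 0] then y
  else if [&& 1 <= x <= m, y <= m & z == m.+1] then x
  else if [&& x == 0, 1 <= y <= m & 1 <= z <= m] then y
  else if [&& 1 <= x <= m, y == 0 & 1 <= z <= m] then x
  else if [&& 1 <= x <= m.+1, 1 <= y <= m.+1 & 1 <= z <= m] then z
  else 1.

(* f_n on a point given as a function of 0-based coordinates:
   paper coordinate x_k is [x (k-1)].  For n <= 3 this is f_3. *)
Fixpoint fn (m n : nat) (x : nat -> nat) {struct n} : nat :=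
  match n with
  | 0 | 1 | 2 | 3 => f3 m (x 0) (x 1) (x 2)
  | n'.+1 =>
      if x n' <= m then fn m n' x
      else fn m n' (fun k => if k == 0 then m.+1 - x 1
                             else if k == 1 then x 0 else x k)
  end.

Definition in_box (m : nat) {n : nat} (p : n.-tuple nat) : Prop :=
  forall k : 'I_n, tnth p k <= m.+1.

Definition Qset (m n i : nat) (p : n.-tuple nat) : Prop :=
  in_box m p /\ fn m n (fun k => nth 0 p k) = i.

Definition unit_step (n : nat) (p q : n.-tuple nat) : Prop :=
  exists k : 'I_n,
    (tnth q k = (tnth p k).+1 \/ tnth p k = (tnth q k).+1) /\
    (forall l : 'I_n, l != k -> tnth p l = tnth q l).

Definition adjacent (n : nat) (P Q : n.-tuple nat -> Prop) : Prop :=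
  exists p q, P p /\ Q q /\ unit_step p q.

(* Main.v *)
Require Import Defs.
From mathcomp Require Import all_boot.

Lemma fn_red (m n : nat) (x : nat -> nat) : 3 <= n ->
  (forall k, 3 <= k -> x k = 0) -> fn m n x = f3 m (x 0) (x 1) (x 2).
Proof.
move=> Hn Hx; elim: n Hn => [|n IH] Hn //.
case: n IH Hn => [|[|[|n]]] IH Hn //.
rewrite /=.
have -> : x n.+3 <= m by rewrite Hx.
exact: IH.
Qed.

Definition pt (n' a j i : nat) : (n'.+3).-tuple nat :=
  cons_tuple a (cons_tuple j (cons_tuple i (nseq_tuple n' 0))).

Lemma pt_nth n' a j i k : 3 <= k -> nth 0 (pt n' a j i) k = 0.
Proof.
case: k => [|[|[|k]]] // _ /=.
by rewrite nth_nseq if_same.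
Qed.

Theorem lemma5p3 (n m : nat) : 3 <= n -> 1 <= m ->
  forall i j : nat, 1 <= i -> i < j -> j <= m ->
    @adjacent n (@Qset m n i) (@Qset m n j).
Proof.
case: n => [|[|[|n']]] // _ Hm i j Hi Hij Hj.
have Hi' : i <= m by apply: leq_trans (ltnW Hij) Hj.
have Hj1 : 1 <= j by apply: leq_trans Hij.
have e1 : (i == 0) = false by case: i Hi {Hij Hi'}.
have e2 : (i == m.+1) = false by apply/negbTE; rewrite neq_ltn ltnS Hi'.
have e3 : (j == 0) = false by case: j Hj1 {Hij Hj}.
have e4 : j <= m.+1 by apply: leq_trans Hj _.
exists (pt n' 1 j i), (pt n' 0 j i).
split; [split|split; [split|]].
- case=> [[|[|[|k]]] Hk]; rewrite (tnth_nth 0) /= ?nth_nseq ?if_same //.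
  exact: leq_trans Hi' _.
- rewrite fn_red //; last exact: pt_nth.
  by rewrite /= /f3 e1 e2 e3 e4 ?Hm ?Hj ?Hj1 ?Hi ?Hi' ?andbF /=.
- case=> [[|[|[|k]]] Hk]; rewrite (tnth_nth 0) /= ?nth_nseq ?if_same //.
  exact: leq_trans Hi' _.
- rewrite fn_red //; last exact: pt_nth.
  by rewrite /= /f3 e1 e2 e3 e4 ?Hm ?Hj ?Hj1 ?Hi ?Hi' ?andbF /=.
- exists ord0; split; first by right; rewrite !(tnth_nth 0).
  case=> [[|l] Hl] Hne; rewrite !(tnth_nth 0) //.
Qed.
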